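(* For every rooted realizable chirotope $(\chi,u)$, there exists $\varepsilon>0$ such that for every $\delta>0$ there exists a right-$(\delta,\varepsilon)$-squeezing of $(\chi,u)$.
   Context: A chirotope on a finite set $E$ is a map $\chi$ from ordered triples of distinct elements of $E$ to $\{-1,1\}$ satisfying the usual alternating symmetry and the interiority and transitivity axioms. It is realizable if there exist points $\mathfrak p_e\in\mathbb R^2$ ($e\in E$), no three collinear, such that $\chi(x,y,z)=1$ iff $\mathfrak p_x,\mathfrak p_y,\mathfrak p_z$ are in counterclockwise order (a realization of $\chi$). A rooted chirotope is a pair $(\chi,u)$ with $u$ an extreme element of $\chi$ (a convex hull vertex: there is $y\neq u$ with $\chi(u,y,z)$ constant over all other $z$); $u^+$ (resp. $u^-$) is the successor (resp. predecessor) of $u$ in counterclockwise order on the convex hull, i.e. the element $y$ with $\chi(u,y,z)=1$ (resp. $\chi(y,u,z)=1$) for all $z\notin\{u,y\}$. A right-$(\delta,\varepsilon)$-squeezing of a rooted chirotope $(\chi,u)$ is a realization $\mathcal P=\{\mathfrak p_e\}$ of $\chi$ such that $\mathfrak p_u=(0,1)$, $\mathfrak p_{u^+}=(0,0)$, $\mathfrak p_{u^-}=(1,0)$, $\mathcal P\setminus\{\mathfrak p_u,\mathfrak p_{u^+}\}\subseteq[\varepsilon,1]\times[-\delta,\delta]$, and every line through two points of $\mathcal P\setminus\{\mathfrak p_u\}$ has slope in $[-\delta,\delta]$. *)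

(* Defs.v *)
From HB Require Import structures.
From mathcomp Require Import all_boot all_order all_algebra.
From mathcomp Require Import Rstruct.
Set Implicit Arguments. Unset Strict Implicit. Unset Printing Implicit Defensive.
Import Order.TTheory GRing.Theory Num.Theory.
Local Open Scope ring_scope.

Notation RR := Rdefinitions.R.

Section Chirotopes.
Variable E : finType.

Definition chirotope_axioms (chi : E -> E -> E -> int) : Prop :=
  (forall x y z, uniq [:: x; y; z] -> chi x y z = 1 \/ chi x y z = -1) /\
  (* alternating symmetry (a cyclic shift and a transposition generate S_3) *)
  (forall x y z, uniq [:: x; y; z] ->
      chi y z x = chi x y z /\ chi y x z = - chi x y z) /\
  (forall p q r t, uniq [:: p; q; r; t] ->
      chi t q r = 1 -> chi p t r = 1 -> chi p q t = 1 -> chi p q r = 1) /\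
  (forall t s p q r, uniq [:: t; s; p; q; r] ->
      chi t s p = 1 -> chi t s q = 1 -> chi t s r = 1 ->
      chi t p q = 1 -> chi t q r = 1 -> chi t p r = 1).

(* orientation determinant: positive iff a, b, c are counterclockwise *)
Definition orient (a b c : RR * RR) : RR :=
  (b.1 - a.1) * (c.2 - a.2) - (b.2 - a.2) * (c.1 - a.1).

Definition is_realization (chi : E -> E -> E -> int) (P : E -> RR * RR) : Prop :=
  forall x y z, uniq [:: x; y; z] ->
    orient (P x) (P y) (P z) != 0 /\
    (chi x y z = 1 <-> 0 < orient (P x) (P y) (P z)).

Definition realizable (chi : E -> E -> E -> int) : Prop :=
  exists P : E -> RR * RR, is_realization chi P.

(* u is an extreme element (convex hull vertex) *)
Definition extreme (chi : E -> E -> E -> int) (u : E) : Prop :=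
  exists y, y != u /\ exists c : int,
    forall z, z != u -> z != y -> chi u y z = c.

(* y is u^+ (successor of u on the hull, counterclockwise) *)
Definition is_succ (chi : E -> E -> E -> int) (u y : E) : Prop :=
  y != u /\ forall z, z != u -> z != y -> chi u y z = 1.

(* y is u^- (predecessor of u on the hull) *)
Definition is_pred (chi : E -> E -> E -> int) (u y : E) : Prop :=
  y != u /\ forall z, z != u -> z != y -> chi y u z = 1.

Definition right_squeezing (chi : E -> E -> E -> int) (u : E)
    (delta eps : RR) (P : E -> RR * RR) : Prop :=
  is_realization chi P /\
  P u = (0, 1) /\
  (forall y, is_succ chi u y -> P y = (0, 0)) /\
  (forall y, is_pred chi u y -> P y = (1, 0)) /\
      (forall e, e != u -> ~ is_succ chi u e ->
         (eps <= (P e).1 <= 1) /\ (- delta <= (P e).2 <= delta)) /\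
      (forall x y, x != u -> y != u -> P x != P y ->
         (P x).1 != (P y).1 /\
         `|((P y).2 - (P x).2) / ((P y).1 - (P x).1)| <= delta).

End Chirotopes.

(* Main.v *)
Require Import Defs.
From HB Require Import structures.
From mathcomp Require Import all_boot all_order all_algebra.
From mathcomp Require Import Rstruct.
From mathcomp Require Import ring lra.
Import Order.TTheory GRing.Theory Num.Theory.
Local Open Scope ring_scope.

Lemma uniq3 (T : eqType) (x y z : T) : x != y -> x != z -> y != z -> uniq [:: x; y; z].
Proof. by move=> h1 h2 h3; rewrite /= !inE negb_or h1 h2 h3. Qed.

Lemma third (E : finType) (u y : E) : (3 <= #|E|)%N -> exists z, z != u /\ z != y.
Proof.
move=> H3.
case: (pickP (fun z => (z != u) && (z != y))) => [z /andP [h1 h2]|hz].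
  by exists z.
have : (#|E| <= #|[set u; y]|)%N.
  rewrite -cardsT; apply: subset_leq_card; apply/subsetP => z _.
  rewrite !inE; have := hz z; case: (eqVneq z u) => //= hu.
  by case: (eqVneq z y).
rewrite cards2; case: (u != y) => /= h; move: (leq_trans H3 h) => //.
Qed.

Lemma orient_cyc a b c : orient b c a = orient a b c.
Proof. rewrite /orient; ring. Qed.
Lemma orient_sw12 a b c : orient b a c = - orient a b c.
Proof. rewrite /orient; ring. Qed.
Lemma orient_sw13 a b c : orient c b a = - orient a b c.
Proof. rewrite /orient; ring. Qed.

Lemma lb_seq (T : eqType) (s : seq T) (f : T -> RR) :
  (forall z, z \in s -> 0 < f z) ->
  exists m, 0 < m /\ m <= 1 /\ forall z, z \in s -> m <= f z.
Proof.
elim: s => [|x s IH] H.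
  by exists 1; split => //; split => //.
have [m [m0 [m1 hm]]] : exists m, 0 < m /\ m <= 1 /\ forall z, z \in s -> m <= f z.
  by apply: IH => z zs; apply: H; rewrite inE zs orbT.
have fx : 0 < f x by apply: H; rewrite inE eqxx.
exists (Order.min m (f x)); split; first by rewrite lt_min m0 fx.
split; first by rewrite ge_min m1.
move=> z; rewrite inE => /orP [/eqP -> | zs]; rewrite ge_min.
  by rewrite lexx orbT.
by rewrite hm.
Qed.


Lemma lb_fin (T : finType) (Pr : pred T) (f : T -> RR) :
  (forall z, Pr z -> 0 < f z) ->
  exists m, 0 < m /\ m <= 1 /\ forall z, Pr z -> m <= f z.
Proof.
move=> H.
have [|m [m0 [m1 hm]]] := @lb_seq _ [seq z <- enum T | Pr z] f.
  by move=> z; rewrite mem_filter => /andP [pz _]; apply: H.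
exists m; split => //; split => // z pz; apply: hm.
by rewrite mem_filter pz mem_enum.
Qed.

Lemma argmin_seq (T : eqType) (s : seq T) (f : T -> RR) x0 :
  x0 \in s -> exists w, w \in s /\ forall z, z \in s -> f w <= f z.
Proof.
elim: s x0 => [|x s IH] x0 //= _.
case: s IH => [|y s] IH.
  exists x; split; first by rewrite inE.
  by move=> z; rewrite inE => /eqP ->.
have [w [ws hw]] := IH y (mem_head _ _).
case: (leP (f x) (f w)) => hxw.
  exists x; split; first exact: mem_head.
  move=> z; rewrite inE => /orP [/eqP -> //| zs].
  exact: le_trans hxw (hw z zs).
exists w; split; first by rewrite inE ws orbT.
move=> z; rewrite inE => /orP [/eqP -> | zs]; first exact: ltW.
exact: hw.
Qed.

Lemma argmin_fin (T : finType) (Pr : pred T) (f : T -> RR) x0 :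
  Pr x0 -> exists w, Pr w /\ forall z, Pr z -> f w <= f z.
Proof.
move=> p0.
have [|w [ws hw]] := @argmin_seq _ [seq z <- enum T | Pr z] f x0.
  by rewrite mem_filter p0 mem_enum.
move: ws; rewrite mem_filter => /andP [pw _].
exists w; split => // z pz; apply: hw; by rewrite mem_filter pz mem_enum.
Qed.

Lemma geo (E : finType) (p : E -> RR * RR) (u y : E) :
  (forall x y z, uniq [:: x; y; z] -> orient (p x) (p y) (p z) != 0) ->
  y != u -> (exists z0, z0 != u /\ z0 != y) ->
  (forall z, z != u -> z != y -> 0 < orient (p u) (p y) (p z)) ->
  exists w, w != u /\ forall z, z != u -> z != w -> 0 < orient (p w) (p u) (p z).
Proof.
move=> Hnc yu [z0 [z0u z0y]] Hpos.
pose cr z := orient (p u) (p y) (p z).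
pose dt z := ((p y).1 - (p u).1) * ((p z).1 - (p u).1)
           + ((p y).2 - (p u).2) * ((p z).2 - (p u).2).
have [w [/andP [wu wy] hw]] :=
  @argmin_fin _ (fun z => (z != u) && (z != y)) (fun z => dt z / cr z) z0
    (introT andP (conj z0u z0y)).
exists w; split => // z zu zw.
case: (eqVneq z y) => [-> | zy].
  by rewrite -(orient_cyc (p w)); apply: Hpos.
have h := hw z (introT andP (conj zu zy)).
have cz : 0 < cr z by apply: Hpos.
have cw : 0 < cr w by apply: Hpos.
move: h; rewrite ler_pdivrMr // mulrAC ler_pdivlMr // => h.
have on0 : orient (p w) (p u) (p z) != 0.
  by apply: Hnc; apply: uniq3; rewrite // eq_sym.
pose n := ((p y).1 - (p u).1) ^+ 2 + ((p y).2 - (p u).2) ^+ 2.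
have key : dt z * cr w - dt w * cr z = n * orient (p w) (p u) (p z).
  by rewrite /dt /cr /n /orient; ring.
have L : n * (((p z).1 - (p u).1) ^+ 2 + ((p z).2 - (p u).2) ^+ 2)
         = dt z ^+ 2 + cr z ^+ 2.
  by rewrite /dt /cr /n /orient; ring.
have n0 : 0 < n.
  rewrite lt_neqAle; apply/andP; split; last by rewrite /n addr_ge0 // sqr_ge0.
  apply/eqP => hn; move: L; rewrite -hn mul0r => L.
  have : 0 < cr z ^+ 2 by rewrite exprn_gt0.
  have : 0 <= dt z ^+ 2 by rewrite sqr_ge0.
  lra.
have : 0 <= n * orient (p w) (p u) (p z) by rewrite -key; lra.
rewrite pmulr_rge0 // le_eqVlt => /orP [/eqP h0 | //].
by move: on0; rewrite -h0 eqxx.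
Qed.

Lemma hull_nbrs (E : finType) (chi : E -> E -> E -> int) (u : E) (P0 : E -> RR * RR) :
  (3 <= #|E|)%N -> chirotope_axioms chi -> is_realization chi P0 -> extreme chi u ->
  exists a b, a != u /\ b != u /\ a != b /\
    (forall z, z != u -> z != a -> 0 < orient (P0 u) (P0 a) (P0 z)) /\
    (forall z, z != u -> z != b -> 0 < orient (P0 b) (P0 u) (P0 z)).
Proof.
move=> H3 [Hval _] HR [y [yu [c Hc]]].
have Hnc : forall x y z, uniq [:: x; y; z] -> orient (P0 x) (P0 y) (P0 z) != 0.
  by move=> x y' z h; case: (HR x y' z h).
have [z0 [z0u z0y]] := @third _ u y H3.
have ex3 : exists z0, z0 != u /\ z0 != y by exists z0.
suff [a [b [au [bu [Ha Hb]]]]] : exists a b, a != u /\ b != u /\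
    (forall z, z != u -> z != a -> 0 < orient (P0 u) (P0 a) (P0 z)) /\
    (forall z, z != u -> z != b -> 0 < orient (P0 b) (P0 u) (P0 z)).
  exists a, b; split => //; split => //; split => //.
  apply/eqP => ab; subst b.
  have [z1 [z1u z1a]] := @third _ u a H3.
  have := Ha z1 z1u z1a; have := Hb z1 z1u z1a.
  rewrite orient_sw12; lra.
have u3 : forall z, z != u -> z != y -> uniq [:: u; y; z].
  by move=> z zu zy; apply: uniq3; rewrite // eq_sym.
have hc : chi u y z0 = c by apply: Hc.
case: (Hval u y z0 (u3 _ z0u z0y)); rewrite hc => hc1.
-
  have Hp : forall z, z != u -> z != y -> 0 < orient (P0 u) (P0 y) (P0 z).
    move=> z zu zy; have [_ h] := HR u y z (u3 _ zu zy); apply/h.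
    by rewrite Hc // hc1.
  have [w [wu Hw]] := @geo _ _ _ _ Hnc yu ex3 Hp.
  by exists y, w.
- have Hn : forall z, z != u -> z != y -> orient (P0 u) (P0 y) (P0 z) < 0.
    move=> z zu zy; have [h0 h] := HR u y z (u3 _ zu zy).
    have : ~ 0 < orient (P0 u) (P0 y) (P0 z).
      by move/h; rewrite Hc // hc1.
    move: h0; case: (ltgtP (orient (P0 u) (P0 y) (P0 z)) 0) => //.
  pose p z := (- (P0 z).1, (P0 z).2).
  have op : forall x y z, orient (p x) (p y) (p z) = - orient (P0 x) (P0 y) (P0 z).
    by move=> *; rewrite /orient /p /=; ring.
  have Hnc' : forall x y z, uniq [:: x; y; z] -> orient (p x) (p y) (p z) != 0.
    by move=> x y' z h; rewrite op oppr_eq0; apply: Hnc.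
  have Hp : forall z, z != u -> z != y -> 0 < orient (p u) (p y) (p z).
    by move=> z zu zy; rewrite op oppr_gt0; apply: Hn.
  have [w [wu Hw]] := @geo _ _ _ _ Hnc' yu ex3 Hp.
  exists w, y; split => //; split => //; split.
    move=> z zu zw; have := Hw z zu zw; rewrite op orient_sw12; lra.
  move=> z zu zy; have := Hn z zu zy; rewrite orient_sw12; lra.
Qed.

Definition wf (lam : RR) (n : RR * RR) : RR := 1 - n.2 + lam * n.2.
Definition fm (lam : RR) (n : RR * RR) : RR * RR :=
  (n.1 / wf lam n, lam * n.2 / wf lam n).

Lemma wf_gt0 lam n : 0 < lam -> lam <= 1 -> n.2 <= 1 -> 0 < wf lam n.
Proof. rewrite /wf => *; nra. Qed.

Lemma wf_le lam n : 0 < lam -> lam <= 1 -> wf lam n <= 1 + `|n.2|.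
Proof.
rewrite /wf => h1 h2; case: (ger0P n.2) => h; nra.
Qed.

Lemma Ybound lam del n : 0 < lam -> lam <= 1 -> n.2 < 1 -> 0 < del ->
  lam * (1 + `|n.2|) ^+ 2 <= del * (1 - n.2) -> `|(fm lam n).2| <= del.
Proof.
move=> l0 l1 t1 d0 h.
have w0 : 0 < wf lam n by apply: wf_gt0 => //; exact: ltW.
rewrite /fm /= normf_div (gtr0_norm w0) ler_pdivrMr // normrM (gtr0_norm l0).
move: h w0; rewrite /wf; case: (ger0P n.2) => ht h w0.
  have e1 : lam * n.2 <= lam * (1 + n.2) ^+ 2.
    by apply: ler_wpM2l; [lra | nra].
  have e2 : del * (1 - n.2) <= del * (1 - n.2 + lam * n.2).
    by apply: ler_wpM2l; [lra | nra].
  lra.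
have e1 : lam * (1 - n.2) <= del.
  have h' : (lam * (1 - n.2)) * (1 - n.2) <= del * (1 - n.2) by move: h; rewrite expr2 mulrA.
  by move: h'; rewrite ler_pM2r //; lra.
have e2 : del <= del * (1 - n.2 + lam * n.2).
  rewrite -[X in X <= _]mulr1; apply: ler_wpM2l; [lra | nra].
nra.
Qed.

Lemma slope_bd lam d2 (n1 n2 : RR * RR) : 0 < lam -> lam <= 1 ->
  n1.2 <= 1 -> n2.2 <= 1 -> orient (0, 1) n1 n2 != 0 -> 0 <= d2 -> d2 <= 1/2 ->
  lam * (2 * (`|n1.1 * n2.2 - n1.2 * n2.1| + `|n2.2 - n1.2| + 1))
     <= d2 * `|orient (0, 1) n1 n2| ->
  (fm lam n1).1 != (fm lam n2).1 /\
  `|((fm lam n2).2 - (fm lam n1).2) / ((fm lam n2).1 - (fm lam n1).1)| <= d2.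
Proof.
move=> l0 l1 t1 t2 o0 d0 d1 h.
have w1 : 0 < wf lam n1 by apply: wf_gt0.
have w2 : 0 < wf lam n2 by apply: wf_gt0.
set o := orient (0, 1) n1 n2 in o0 h *.
set mu := n1.1 * n2.2 - n1.2 * n2.1 in h.
have eX : (fm lam n2).1 - (fm lam n1).1 = (o - lam * mu) / (wf lam n1 * wf lam n2).
  rewrite /fm /o /mu /orient /wf /=; field.
  by move: w1 w2; rewrite /wf => w1 w2; rewrite !gt_eqF.
have eY : (fm lam n2).2 - (fm lam n1).2 = lam * (n2.2 - n1.2) / (wf lam n1 * wf lam n2).
  rewrite /fm /wf /=; field.
  by move: w1 w2; rewrite /wf => w1 w2; rewrite !gt_eqF.
have on : 0 < `|o| by rewrite normr_gt0.
have hm : lam * `|mu| <= `|o| / 4.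
  have : 0 <= `|n2.2 - n1.2| by [].
  have : 0 <= `|mu| by [].
  nra.
have ht : lam * `|n2.2 - n1.2| <= d2 * `|o| / 2.
  have : 0 <= `|n2.2 - n1.2| by [].
  have : 0 <= `|mu| by [].
  nra.
have hlo : `|o| * 3 / 4 <= `|o - lam * mu|.
  have := ler_normD (o - lam * mu) (lam * mu).
  rewrite subrK normrM (gtr0_norm l0); lra.
have olm : o - lam * mu != 0.
  by rewrite -normr_gt0; apply: lt_le_trans hlo; lra.
have ww : 0 < wf lam n1 * wf lam n2 by rewrite mulr_gt0.
split.
  rewrite eq_sym -subr_eq0 eX mulf_eq0 negb_or olm /= invr_eq0 gt_eqF //.
have -> : ((fm lam n2).2 - (fm lam n1).2) / ((fm lam n2).1 - (fm lam n1).1)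
        = lam * (n2.2 - n1.2) / (o - lam * mu).
  rewrite eX eY; field.
  by rewrite olm !gt_eqF.
rewrite normf_div ler_pdivrMr ?normr_gt0 // normrM (gtr0_norm l0).
nra.
Qed.

Definition nm (A B C p : RR * RR) : RR * RR :=
  (orient A p C / orient A B C, orient A B p / orient A B C).

Lemma orient_nm A B C p q r : orient A B C != 0 ->
  orient (nm A B C p) (nm A B C q) (nm A B C r) = orient p q r / orient A B C.
Proof.
move=> HD; rewrite /nm /orient /=.
move: HD; rewrite /orient => HD.
field. exact: HD.
Qed.

Lemma orient_fm lam n1 n2 n3 : wf lam n1 != 0 -> wf lam n2 != 0 -> wf lam n3 != 0 ->
  orient (fm lam n1) (fm lam n2) (fm lam n3) =
  lam * orient n1 n2 n3 / (wf lam n1 * wf lam n2 * wf lam n3).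
Proof.
rewrite /fm /orient /wf /= => h1 h2 h3.
field. by rewrite h1 h2 h3.
Qed.

Lemma neq_sym (T : eqType) (x y : T) : x != y -> y != x.
Proof. by rewrite eq_sym. Qed.

Theorem lemma2p6 (E : finType) (chi : E -> E -> E -> int) (u : E) :
  (3 <= #|E|)%N ->
  chirotope_axioms chi -> realizable chi -> extreme chi u ->
  exists eps : RR, 0 < eps /\
    forall delta : RR, 0 < delta ->
      exists P : E -> RR * RR, right_squeezing chi u delta eps P.
Proof.
move=> H3 Hax [P0 HR] Hext.
have [Hval _] := Hax.
have Hnc : forall x y z, uniq [:: x; y; z] -> orient (P0 x) (P0 y) (P0 z) != 0.
  by move=> x y z h; case: (HR x y z h).
have [a [b [au [bu [ab [Ha Hb]]]]]] := @hull_nbrs _ _ _ _ H3 Hax HR Hext.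
set A := P0 a in Ha Hb; set B := P0 b in Ha Hb; set C := P0 u in Ha Hb.
have D0 : 0 < orient A B C by rewrite orient_cyc; apply: Ha; rewrite // eq_sym.
have D0' : orient A B C != 0 by rewrite gt_eqF.
pose N z := nm A B C (P0 z).
have oN x y z : orient (N x) (N y) (N z) = orient (P0 x) (P0 y) (P0 z) / orient A B C.
  exact: orient_nm.
have Nu : N u = (0, 1).
  have e1 : orient A C C = 0 by rewrite /orient; ring.
  by rewrite /N /nm -/C e1 mul0r divff.
have Na : N a = (0, 0).
  have e1 : orient A A C = 0 by rewrite /orient; ring.
  have e2 : orient A B A = 0 by rewrite /orient; ring.
  by rewrite /N /nm -/A e1 e2 !mul0r.
have Nb : N b = (1, 0).
  have e2 : orient A B B = 0 by rewrite /orient; ring.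
  by rewrite /N /nm -/B e2 mul0r divff.
have Hs : forall z, z != u -> z != a -> 0 < (N z).1.
  move=> z zu za.
  have e : forall n : RR * RR, orient (0, 1) (0, 0) n = n.1 by move=> n; rewrite /orient /=; ring.
  by rewrite -e -Nu -Na oN divr_gt0 //; apply: Ha.
have Hst : forall z, z != u -> z != b -> 0 < 1 - (N z).1 - (N z).2.
  move=> z zu zb.
  have e : forall n : RR * RR, orient (1, 0) (0, 1) n = 1 - n.1 - n.2.
    by move=> n; rewrite /orient /=; ring.
  by rewrite -e -Nu -Nb oN divr_gt0 //; apply: Hb.
have Ht : forall z, z != u -> (N z).2 < 1.
  move=> z zu; case: (eqVneq z b) => [-> | zb]; first by rewrite Nb /=; lra.
  have := Hst z zu zb; case: (eqVneq z a) => [-> | za]; first by rewrite Na /=; lra.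
  have := Hs z zu za; lra.
have Ht' : forall z, (N z).2 <= 1.
  move=> z; case: (eqVneq z u) => [-> | zu]; first by rewrite Nu.
  exact: ltW (Ht z zu).

pose o x y := orient (0, 1) (N x) (N y).
pose K x y := `|(N x).1 * (N y).2 - (N x).2 * (N y).1| + `|(N y).2 - (N x).2| + 1.
have K0 : forall x y, 0 < K x y.
  by move=> x y; rewrite /K; have := normr_ge0 ((N y).2 - (N x).2);
     have := normr_ge0 ((N x).1 * (N y).2 - (N x).2 * (N y).1); lra.
have o0 : forall x y, x != u -> y != u -> x != y -> o x y != 0.
  move=> x y xu yu xy; rewrite /o -Nu oN mulf_eq0 negb_or invr_eq0 D0' andbT.
  by apply: Hnc; apply: uniq3; rewrite // eq_sym.
have [mg [mg0 [mg1 Hmg]]] : exists m, 0 < m /\ m <= 1 /\ forall x y,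
    x != u -> y != u -> x != y -> m <= `|o x y| / (2 * K x y).
  have [|m [m0 [m1 hm]]] := @lb_fin _
     (fun xy : E * E => [&& xy.1 != u, xy.2 != u & xy.1 != xy.2])
     (fun xy => `|o xy.1 xy.2| / (2 * K xy.1 xy.2)).
    move=> [x y] /and3P [xu yu xy] /=.
    by rewrite divr_gt0 ?normr_gt0 ?o0 // mulr_gt0.
  exists m; split => //; split => // x y xu yu xy.
  by apply: (hm (x, y)); rewrite /= xu yu xy.
have [mf [mf0 [mf1 Hmf]]] : exists m, 0 < m /\ m <= 1 /\ forall z,
    z != u -> m <= (1 - (N z).2) / (1 + `|(N z).2|) ^+ 2.
  apply: (@lb_fin _ (fun z => z != u)) => z zu.
  rewrite divr_gt0 ?exprn_gt0 //; first by have := Ht z zu; lra.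
  by have := normr_ge0 (N z).2; lra.
have [mh [mh0 [mh1 Hmh]]] : exists m, 0 < m /\ m <= 1 /\ forall z,
    z != u -> z != a -> m <= (N z).1 / (1 + `|(N z).2|).
  have [|m [m0 [m1 hm]]] := @lb_fin _ (fun z => (z != u) && (z != a))
     (fun z => (N z).1 / (1 + `|(N z).2|)).
    move=> z /andP [zu za]; rewrite divr_gt0 ?Hs //.
    by have := normr_ge0 (N z).2; lra.
  exists m; split => //; split => // z zu za; apply: hm; by rewrite zu za.
exists mh; split => // del d0.
pose d2 := del / (1 + 2 * del).
have d20 : 0 < d2 by rewrite divr_gt0 //; lra.
have d2d : d2 <= del by rewrite ler_pdivrMr; nra.
have d21 : d2 <= 1/2 by rewrite ler_pdivrMr; lra.
pose lam := d2 * mg * mf.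
have l0 : 0 < lam.
  rewrite /lam. apply: mulr_gt0 => //. exact: mulr_gt0.
have l1' : lam <= d2 * mg.
  rewrite /lam -[X in _ <= X]mulr1; apply: ler_wpM2l => //.
  by apply: mulr_ge0; apply: ltW.
have l1'' : d2 * mg <= d2.
  rewrite -[X in _ <= X]mulr1; apply: ler_wpM2l => //; exact: ltW.
have l1 : lam <= 1 by lra.
have Hw : forall z, 0 < wf lam (N z) by move=> z; apply: wf_gt0.
have Hsl : forall x y, x != u -> y != u -> x != y ->
  (fm lam (N x)).1 != (fm lam (N y)).1 /\
  `|((fm lam (N y)).2 - (fm lam (N x)).2) / ((fm lam (N y)).1 - (fm lam (N x)).1)| <= d2.
  move=> x y xu yu xy; apply: slope_bd => //; first by apply: o0.
    exact: ltW.
  have := Hmg x y xu yu xy; rewrite ler_pdivlMr ?mulr_gt0 // -/(K x y) => hh.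
  rewrite -/(o x y) -/(K x y).
  have k0 := K0 x y.
  have e1 : lam * (2 * K x y) <= d2 * mg * (2 * K x y).
    by apply: ler_wpM2r => //; lra.
  have e2 : d2 * (mg * (2 * K x y)) <= d2 * `|o x y|.
    by apply: ler_wpM2l => //; exact: ltW.
  move: e2; rewrite mulrA; lra.
pose P z := fm lam (N z).
have HRP : is_realization chi P.
  move=> x y z hu; have [h0 h1] := HR x y z hu.
  have EE : orient (P x) (P y) (P z) = (lam / orient A B C /
      (wf lam (N x) * wf lam (N y) * wf lam (N z))) * orient (P0 x) (P0 y) (P0 z).
    rewrite /P orient_fm ?gt_eqF ?Hw // oN. ring.
  have kp : 0 < lam / orient A B C / (wf lam (N x) * wf lam (N y) * wf lam (N z)).
    by rewrite !divr_gt0 // !mulr_gt0.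
  rewrite EE; split; first by apply: mulf_neq0 => //; rewrite gt_eqF.
  by rewrite pmulr_rgt0.
have Hsucc : is_succ chi u a.
  split => // z zu za.
  have hu : uniq [:: u; a; z] by apply: uniq3; rewrite eq_sym.
  have [_ h] := HR u a z hu.
  by apply/h; apply: Ha.
have succ_eq : forall y, is_succ chi u y -> y = a.
  move=> y [yu Hy]; apply/eqP; apply/negPn/negP => ya.
  have hu : uniq [:: u; y; a] by apply: uniq3; rewrite // eq_sym.
  have [_ h] := HR u y a hu.
  have h1 := (proj1 h) (Hy a au (@neq_sym _ _ _ ya)).
  have h2 := Ha y yu ya.
  move: h1; rewrite -/C -/A (orient_cyc A) orient_sw12; lra.
have pred_eq : forall y, is_pred chi u y -> y = b.
  move=> y [yu Hy]; apply/eqP; apply/negPn/negP => yb.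
  have hu : uniq [:: y; u; b] by apply: uniq3; rewrite // eq_sym.
  have [_ h] := HR y u b hu.
  have h1 := (proj1 h) (Hy b bu (@neq_sym _ _ _ yb)).
  have h2 := Hb y yu yb.
  move: h1; rewrite -/C -/B orient_sw13; lra.
have Pb : P b = (1, 0).
  have w1 : wf lam (1, 0) = 1 by rewrite /wf /=; ring.
  by rewrite /P Nb /fm w1 /= mulr0 !divr1.
have Pu : P u = (0, 1).
  have w1 : wf lam (0, 1) = lam by rewrite /wf /=; ring.
  by rewrite /P Nu /fm w1 /= mul0r mulr1 divff // gt_eqF.
have Pa : P a = (0, 0).
  have w1 : wf lam (0, 0) = 1 by rewrite /wf /=; ring.
  by rewrite /P Na /fm w1 /= mulr0 !divr1.
exists P; split => //; split => //; split.
  by move=> y /succ_eq ->.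
split.
  by move=> y /pred_eq ->.
split; last first.
  move=> x y xu yu neq; case: (eqVneq x y) => [xy | xy].
    by rewrite xy eqxx in neq.
  have [h1 h2] := Hsl x y xu yu xy; split => //.
  exact: le_trans h2 d2d.
move=> e eu ens.
have ea : e != a by apply/eqP => ea; apply: ens; rewrite ea.
have te := Ht e eu.
have w0 := Hw e.
have wle : wf lam (N e) <= 1 + `|(N e).2| by apply: wf_le.
split; last first.
  rewrite -ler_norml; apply: Ybound => //.
  have hm := Hmf e eu.
  have p0 : 0 < (1 + `|(N e).2|) ^+ 2.
    by rewrite exprn_gt0 //; have := normr_ge0 (N e).2; lra.
  move: hm; rewrite ler_pdivlMr // => hm.
  have e1 : lam <= del * mf.
    rewrite /lam; apply: ler_wpM2r; [exact: ltW | lra].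
  have e2 : lam * (1 + `|(N e).2|) ^+ 2 <= del * mf * (1 + `|(N e).2|) ^+ 2.
    by apply: ler_wpM2r => //; exact: ltW.
  have e3 : del * (mf * (1 + `|(N e).2|) ^+ 2) <= del * (1 - (N e).2).
    by apply: ler_wpM2l => //; exact: ltW.
  move: e3; rewrite mulrA; lra.
apply/andP; split.
  apply: le_trans (Hmh e eu ea) _.
  have s0 := Hs e eu ea.
  have n0 : 0 < 1 + `|(N e).2| by have := normr_ge0 (N e).2; lra.
  rewrite /P /fm /= ler_pdivlMr // mulrAC ler_pdivrMr //.
  by apply: ler_wpM2l => //; exact: ltW.
case: (eqVneq e b) => [-> | eb]; first by rewrite Pb.
have [hx hsl] := Hsl b e bu eu (@neq_sym _ _ _ eb).
rewrite -/(P b) -/(P e) in hx hsl.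
have ho : 0 < orient (P b) (P u) (P e).
  have hu : uniq [:: b; u; e] by apply: uniq3; rewrite // eq_sym.
  have [_ h] := HRP b u e hu.
  apply/h; have [_ h'] := HR b u e hu; apply/h'; exact: Hb.
move: ho hx hsl; rewrite Pb Pu /orient.
set X := (P e).1; set Y := (P e).2; rewrite /= => ho hx hsl.
rewrite leNgt; apply/negP => X1.
move: hsl; rewrite normf_div ler_pdivrMr; last by rewrite normr_gt0 subr_eq0 eq_sym.
idtac.
rewrite (gtr0_norm (_ : 0 < X - 1)); last first.
  by rewrite subr_gt0.
rewrite ?subr0 => hY.
have := ler_norm (- Y); rewrite normrN => hn.
move: ho; rewrite ?subr0 ?sub0r => ho.
have X0 : 0 <= X - 1 by rewrite subr_ge0 ltW.
have hh := ler_wpM2r X0 d21.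
lra.
Qed.
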